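(* Let $\{\mathcal{A}_i\}_{i\in I}$ be $*$-subalgebras of a noncommutative probability space $(\mathcal{A},\phi)$ which are $m$-monotone w.r.t. $\phi$, with $m$-monotone family of units $\{1_i\}$. Then $$\phi(a_1\cdots a_{j-1}1_{i_j}a_{j+1}\cdots a_n)=\phi(a_1\cdots a_{j-1}a_{j+1}\cdots a_n)$$ whenever $j\in\{1,\dots,r\}$ and $i_1\ne\cdots\ne i_m<i_{m+1}<\cdots<i_r>i_{r+1}$, where $a_k\in\mathcal{A}_{i_k}$ (arbitrary, not necessarily centered) for $k\ne j$.
   Context: $(\mathcal{A},\phi)$: unital $*$-algebra with a state; $I$ linearly ordered. $\{1_i\}_{i\in I}$, $1_i\in\mathcal{A}_i$ projections that are units of $\mathcal{A}_i$, is an $m$-monotone family of units w.r.t. $\phi$ if $\phi(1_i)=1$ and for all $n$, $1\le j\le n$, indices $i_1,\dots,i_n$, $a_k\in\mathcal{A}_{i_k}\cap\mathrm{Ker}\,\phi$ ($k<j$), $a_k\in\mathcal{A}_{i_k}$ ($k>j$): $\phi(a_1\cdots a_{j-1}1_{i_j}a_{j+1}\cdots a_n)=\phi(a_1\cdots a_{j-1}a_{j+1}\cdots a_n)$ if $j\le m$ or $m<j\le r$ for some $r$ with $i_1\ne\cdots\ne i_m<i_{m+1}<\cdots<i_r>i_{r+1}$, and $=0$ otherwise. $\{\mathcal{A}_i\}$ are $m$-monotone w.r.t. $\phi$ if such a family exists and $\phi(a_1\cdots a_n)=0$ whenever $a_k\in\mathcal{A}_{i_k}\cap\mathrm{Ker}\,\phi$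 and $i_1\ne i_2\ne\cdots\ne i_n$. *)

(* Defs.v *)
From HB Require Import structures.
From mathcomp Require Import all_boot all_order all_algebra.
From mathcomp Require Import complex.
From mathcomp Require Import reals.
Set Implicit Arguments. Unset Strict Implicit. Unset Printing Implicit Defensive.
Import Order.TTheory GRing.Theory Num.Theory.
Local Open Scope ring_scope.

(* Scalars: a numeric closed field C (instantiated with C = R[i], R : realType,
   i.e. the complex numbers, in the statement).  Num.conj is complex conjugation. *)

Section Defs.
Variable C : numClosedFieldType.
Variable A : algType C.

Record is_star_algebra (star : A -> A) : Prop := {
  star_invol : forall a, star (star a) = a;
  star_add : forall a b, star (a + b) = star a + star b;
  star_scale : forall (c : C) a, star (c *: a) = Num.conj c *: star a;
  star_mul : forall a b, star (a * b) = star b * star a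
}.

Record is_state (star : A -> A) (phi : A -> C) : Prop := {
  state_add : forall a b, phi (a + b) = phi a + phi b;
  state_scale : forall (c : C) a, phi (c *: a) = c * phi a;
  state_unit : phi 1 = 1;
  state_pos : forall a, 0 <= phi (star a * a)
}.

(* S is a *-subalgebra (not necessarily containing the unit of A). *)
Record is_star_subalgebra (star : A -> A) (S : {pred A}) : Prop := {
  sub0 : 0 \in S;
  subD : forall a b, a \in S -> b \in S -> a + b \in S;
  subZ : forall (c : C) a, a \in S -> c *: a \in S;
  subM : forall a b, a \in S -> b \in S -> a * b \in S;
  subS : forall a, a \in S -> star a \in S
}.

Definition word (a : nat -> A) (n : nat) : A := \prod_(1 <= k < n.+1) a k.

Definition word_at (a : nat -> A) (n j : nat) (u : A) : A :=
  \prod_(1 <= k < n.+1) (if k == j then u else a k).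

Definition word_omit (a : nat -> A) (n j : nat) : A :=
  \prod_(1 <= k < n.+1 | k != j) a k.
End Defs.

Section Indices.
Variables (d : Order.disp_t) (I : orderType d).

Definition alternating (idx : nat -> I) (n : nat) : Prop :=
  forall k, (1 <= k)%N -> (k < n)%N -> idx k != idx k.+1.

Definition mpattern (idx : nat -> I) (m r n : nat) : Prop :=
  [/\ forall k, (1 <= k)%N -> (k < m)%N -> idx k != idx k.+1,
      forall k, (1 <= k)%N -> (m <= k)%N -> (k < r)%N -> (idx k < idx k.+1)%O
    & (r < n)%N -> (idx r.+1 < idx r)%O].
End Indices.

Section Monotone.
Variables (C : numClosedFieldType) (A : algType C).
Variables (d : Order.disp_t) (I : orderType d).

Definition mmonotone_units (star : A -> A) (phi : A -> C) (A_ : I -> {pred A})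
    (one_ : I -> A) (m : nat) : Prop :=
  (forall i, [/\ one_ i \in A_ i, one_ i * one_ i = one_ i, star (one_ i) = one_ i,
     (forall a, a \in A_ i -> one_ i * a = a /\ a * one_ i = a) & phi (one_ i) = 1])
  /\
  (forall (n j : nat) (idx : nat -> I) (a : nat -> A),
     (1 <= j)%N -> (j <= n)%N -> alternating idx n ->
     (forall k, (1 <= k)%N -> (k < j)%N -> a k \in A_ (idx k) /\ phi (a k) = 0) ->
     (forall k, (j < k)%N -> (k <= n)%N -> a k \in A_ (idx k)) ->
     let cond := (j <= m)%N \/
                 exists r, [/\ (m < j)%N, (j <= r)%N, (r <= n)%N & mpattern idx m r n] in
     (cond -> phi (word_at a n j (one_ (idx j))) = phi (word_omit a n j)) /\
     (~ cond -> phi (word_at a n j (one_ (idx j))) = 0)).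

Definition mmonotone (star : A -> A) (phi : A -> C) (A_ : I -> {pred A}) (m : nat) : Prop :=
  (exists one_ : I -> A, mmonotone_units star phi A_ one_ m) /\
  (forall (n : nat) (idx : nat -> I) (a : nat -> A),
     (1 <= n)%N -> alternating idx n ->
     (forall k, (1 <= k)%N -> (k <= n)%N -> a k \in A_ (idx k) /\ phi (a k) = 0) ->
     phi (word a n) = 0).
End Monotone.

(* Main.v *)
Require Import Defs.
From HB Require Import structures.
From mathcomp Require Import all_boot all_order all_algebra.
From mathcomp Require Import complex.
From mathcomp Require Import reals.
From mathcomp Require Import zify.
Import Order.TTheory GRing.Theory Num.Theory.
Local Open Scope ring_scope.

Lemma drop_rem (T : eqType) n (a b : seq T) x :
  subseq (drop n (a ++ b)) (drop n (a ++ x :: b)).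
Proof.
elim: a n => [|y a IH] [|n] /=; rewrite ?drop0.
- exact: subseq_cons.
- by rewrite -add1n -drop_drop; apply: drop_subseq.
- by rewrite eqxx; apply: cat_subseq; [apply: subseq_refl | apply: subseq_cons].
- exact: IH.
Qed.

Lemma drop_prefix (T : eqType) n (a b : seq T) :
  subseq (drop n a) (drop n (a ++ b)).
Proof.
rewrite drop_cat; case: ifP => Hn; first exact: prefix_subseq.
by rewrite drop_oversize ?sub0seq //; lia.
Qed.

Lemma run_lemma {d : Order.disp_t} {I : orderType d} {idx : nat -> I} {m n : nat} :
  forall r0, (forall k, (1 <= k)%N -> (k < n)%N -> idx k != idx k.+1) ->
  (1 <= r0)%N -> (r0 <= n)%N ->
  (forall k, (1 <= k)%N -> (m <= k)%N -> (k < r0)%N -> (idx k < idx k.+1)%O) ->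
  exists r, [/\ (r0 <= r)%N, (r <= n)%N,
     (forall k, (1 <= k)%N -> (m <= k)%N -> (k < r)%N -> (idx k < idx k.+1)%O)
   & ((r < n)%N -> (idx r.+1 < idx r)%O)].
Proof.
move=> r0 Halt.
move: {2}(n - r0)%N (leqnn (n - r0)%N) => e.
elim: e r0 => [|e IH] r0 He H1 Hr0 Hinc.
  exists r0; split => //; lia.
case: (ltnP r0 n) => Hlt; last first.
  exists r0; split => //; lia.
have := Halt r0 H1 Hlt.
rewrite neq_lt => /orP [Hl|Hg].
- have Hinc' : forall k, (1 <= k)%N -> (m <= k)%N -> (k < r0.+1)%N -> (idx k < idx k.+1)%O.
    move=> k ? ? ?; case: (ltnP k r0) => ?; first exact: Hinc.
    by have -> : k = r0 by lia.
  have [r [? ? ? ?]] := IH r0.+1 ltac:(lia) ltac:(lia) Hlt Hinc'.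
  by exists r; split => //; lia.
- by exists r0; split => //; lia.
Qed.

Lemma big_seq_nat (A : nzRingType) (T : Type) (f : nat -> A) (g : T -> A) lo (l : seq T) x0 :
  (forall u, (u < size l)%N -> f (lo + u)%N = g (nth x0 l u)) ->
  \prod_(lo <= k < lo + size l) f k = \prod_(x <- l) g x.
Proof.
elim: l lo => [|x l IH] lo H /=.
  by rewrite big_nil big_geq // addn0.
rewrite big_cons big_ltn; last by lia.
have -> : f lo = g x by have := H 0%N isT; rewrite addn0.
congr (_ * _); rewrite -addSnnS; apply: IH => u Hu.
by rewrite addSnnS; apply: (H u.+1).
Qed.

Lemma word_at_split (C : numClosedFieldType) (A : algType C) (a : nat -> A) n j u :
  (1 <= j)%N -> (j <= n)%N ->
  word_at a n j u = \prod_(1 <= k < j) a k * u * \prod_(j.+1 <= k < n.+1) a k.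
Proof.
move=> H1 H2.
rewrite /word_at (big_cat_nat (n:=j)); [|lia|lia].
rewrite (big_cat_nat (m:=j) (n:=j.+1)); [|lia|lia].
rewrite big_nat1 eqxx /= mulrA; congr (_ * _ * _); apply: eq_big_nat => k Hk;
  rewrite ifN //; apply/negP => /eqP E; lia.
Qed.

Lemma word_omit_split (C : numClosedFieldType) (A : algType C) (a : nat -> A) n j :
  (1 <= j)%N -> (j <= n)%N ->
  word_omit a n j = \prod_(1 <= k < j) a k * \prod_(j.+1 <= k < n.+1) a k.
Proof.
move=> H1 H2.
rewrite /word_omit big_mkcond (big_cat_nat (n:=j)) /=; [|lia|lia].
rewrite (big_cat_nat (m:=j) (n:=j.+1)); [|lia|lia].
rewrite big_nat1 eqxx /= mul1r; congr (_ * _); apply: eq_big_nat => k Hk;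
  rewrite ifT //; apply/negP => /eqP E; lia.
Qed.

Section Main.
Variables (R : realType) (A : algType R[i]) (star : A -> A) (phi : A -> R[i])
    (d : Order.disp_t) (I : orderType d) (A_ : I -> {pred A}) (one_ : I -> A) (m : nat).
Hypothesis Hsub : forall i, is_star_subalgebra star (A_ i).
Hypothesis Hst : is_state star phi.
Hypothesis Hu : mmonotone_units star phi A_ one_ m.

Definition pw (s : seq (I * A)) : A := \prod_(x <- s) x.2.
Definition inA (s : seq (I * A)) := all (fun x => x.2 \in A_ x.1) s.
Definition cen (s : seq (I * A)) := all (fun x => phi x.2 == 0) s.
Definition neq : rel I := fun x y => x != y.
Definition inc (l : seq I) := sorted (fun x y : I => (x < y)%O) (drop m.-1 l).

Lemma pw_cat s1 s2 : pw (s1 ++ s2) = pw s1 * pw s2.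
Proof. by rewrite /pw big_cat. Qed.
Lemma pw_cons x s : pw (x :: s) = x.2 * pw s.
Proof. by rewrite /pw big_cons. Qed.
Lemma pw_nil : pw [::] = 1.
Proof. by rewrite /pw big_nil. Qed.

Lemma nth_shift (T : Type) (x0 : T) (p q : seq T) y u :
  nth x0 (p ++ y :: q) (size p + u.+1) = nth x0 q u.
Proof. by rewrite nth_cat ltnNge leq_addr /= addKn. Qed.

Lemma AX p i q : inA (p ++ q) -> cen p ->
  sorted neq (map fst p ++ i :: map fst q) -> inc (map fst p ++ [:: i]) ->
  phi (pw p * one_ i * pw q) = phi (pw p * pw q).
Proof.
move=> HA Hc Halt Hinc.
set s := p ++ (i, one_ i) :: q.
pose x0 := (i, 0 : A).
pose idx k := (nth x0 s k.-1).1.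
pose a k := (nth x0 s k.-1).2.
have Hs : size s = (size p + (size q).+1)%N by rewrite size_cat.
have Hmap : map fst s = map fst p ++ i :: map fst q by rewrite map_cat.
have Hidx : forall k, idx k = nth i (map fst s) k.-1.
  move=> k; rewrite /idx; case: (ltnP k.-1 (size s)) => Hk.
    by rewrite (nth_map x0).
  by rewrite !nth_default // size_map.
have HpA : inA p by move: HA; rewrite /inA all_cat => /andP [].
have HqA : inA q by move: HA; rewrite /inA all_cat => /andP [].
have Halt' : alternating idx (size s).
  move=> k H1 H2; rewrite !Hidx Hmap.
  have := (sortedP i Halt) k.-1; rewrite size_cat /= size_map size_map.
  have -> : k.-1.+1 = k by lia.
  by apply; lia.
have [_ Hax] := Hu.
have Hpc : forall k, (1 <= k)%N -> (k < (size p).+1)%N -> a k \in A_ (idx k) /\ phi (a k) = 0.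
  move=> k H1 H2; have Hk : (k.-1 < size p)%N by lia.
  rewrite /a /idx /s nth_cat Hk; split; [exact: (all_nthP x0 HpA) | apply/eqP; exact: (all_nthP x0 Hc)].
have Hqc : forall k, ((size p).+1 < k)%N -> (k <= size s)%N -> a k \in A_ (idx k).
  move=> k H1 H2; rewrite /a /idx /s.
  have -> : k.-1 = (size p + (k.-1 - (size p).+1).+1)%N by lia.
  rewrite nth_shift; apply: (all_nthP x0 HqA); lia.
have [Hcond _] := Hax (size s) (size p).+1 idx a isT ltac:(lia) Halt' Hpc Hqc.
have Hidxj : idx (size p).+1 = i by rewrite /idx /= /s nth_cat ltnn subnn.
move: Hcond; rewrite Hidxj word_at_split ?word_omit_split; try lia.
have Hpre : \prod_(1 <= k < (size p).+1) a k = pw p.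
  rewrite -add1n; rewrite /pw; apply: (big_seq_nat _ _ _ _ _ _ x0) => u Hu'.
  by rewrite /a /s /= nth_cat Hu'.
have Hsuf : \prod_((size p).+2 <= k < (size s).+1) a k = pw q.
  have -> : (size s).+1 = ((size p).+2 + size q)%N by lia.
  rewrite /pw; apply: (big_seq_nat _ _ _ _ _ _ x0) => u Hu'.
  rewrite /a /s; have -> : ((size p).+2 + u).-1 = (size p + u.+1)%N by lia.
  by rewrite nth_shift.
rewrite Hpre Hsuf; apply.
case: (ltnP m (size p).+1) => Hm; last by left.
right.
have Hinc0 : forall k, (1 <= k)%N -> (m <= k)%N -> (k < (size p).+1)%N -> (idx k < idx k.+1)%O.
  move=> k H1 H2 H3.
  have Ht : forall u, (u < (size p).+1)%N -> nth i (map fst s) u = nth i (map fst p ++ [:: i]) u.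
    move=> u Hu'; rewrite Hmap -cat1s catA nth_cat size_cat /= size_map addn1 Hu' //.
  rewrite !Hidx !Ht; try lia.
  have := (sortedP i Hinc) (k.-1 - m.-1)%N; rewrite !nth_drop size_drop size_cat size_map /=.
  have -> : (m.-1 + (k.-1 - m.-1))%N = k.-1 by lia.
  have -> : (m.-1 + (k.-1 - m.-1).+1)%N = k by lia.
  by apply; lia.
have [r [Hr1 Hr2 Hr3 Hr4]] := run_lemma (size p).+1 Halt' isT ltac:(lia) Hinc0.
exists r; split => //; try lia.
split => // k H1 H2; apply: Halt' => //; lia.
Qed.

Definition Hyp (p : seq (I * A)) (i : I) :=
  (exists p' y, p = rcons p' (i, y)) \/
  (sorted neq (map fst p ++ [:: i]) /\ inc (map fst p ++ [:: i])).

Lemma one_in i : one_ i \in A_ i.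
Proof. by have [H _] := Hu; have [] := H i. Qed.
Lemma unit_l i x : x \in A_ i -> one_ i * x = x.
Proof. by have [H _] := Hu; have [_ _ _ H' _] := H i => /H' []. Qed.
Lemma unit_r i x : x \in A_ i -> x * one_ i = x.
Proof. by have [H _] := Hu; have [_ _ _ H' _] := H i => /H' []. Qed.
Lemma phi_one i : phi (one_ i) = 1.
Proof. by have [H _] := Hu; have [] := H i. Qed.

Lemma inA_cat s1 s2 : inA (s1 ++ s2) = inA s1 && inA s2.
Proof. by rewrite /inA all_cat. Qed.
Lemma inA_cons x s : inA (x :: s) = (x.2 \in A_ x.1) && inA s.
Proof. by []. Qed.

Lemma inc_rem {a b x} : inc (a ++ x :: b) -> inc (a ++ b).
Proof.
rewrite /inc => H; apply: (subseq_sorted _ (drop_rem _ _ a b x)) H.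
by move=> y x' z; apply: lt_trans.
Qed.

Lemma inc_pre {a b} : inc (a ++ b) -> inc a.
Proof.
rewrite /inc => H; apply: (subseq_sorted _ (drop_prefix _ _ a b)) H.
by move=> y x' z; apply: lt_trans.
Qed.

Lemma alt_rem {a b : seq I} {x k y} :
  sorted neq (a ++ x :: k :: y :: b) -> x != y -> sorted neq (a ++ x :: y :: b).
Proof.
rewrite !sorted_cat_cons /= => /andP [-> /and3P [_ _ ->]] Hxy.
by rewrite andbT.
Qed.

Lemma alt_merge {a b : seq I} {x k} :
  sorted neq (a ++ x :: k :: x :: b) -> sorted neq (a ++ x :: b).
Proof.
rewrite !sorted_cat_cons /= => /andP [-> /and3P [_ _ ->]]; by [].
Qed.

Lemma sorted_pre (e : rel I) a x b c : sorted e (a ++ x :: (b ++ c)) -> sorted e (a ++ x :: b).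
Proof. by rewrite -cat_cons catA => /cat_sorted2 []. Qed.

Lemma split_q i (q : seq (I * A)) :
  path neq i (map fst q) \/ (exists y q', q = (i, y) :: q') \/
  (exists q1 h x y q2, q = q1 ++ (h, x) :: (h, y) :: q2).
Proof.
elim: q i => [|[h x] q IH] i /=; first by left.
case: (eqVneq h i) => [->|Hne]; first by right; left; exists x, q.
case: (IH h) => [Hp | [[y [q' ->]] | [q1 [h' [x' [y' [q2 ->]]]]]]].
- by left; rewrite /neq eq_sym Hne.
- by right; right; exists [::], h, x, y, q'.
- by right; right; exists ((h, x) :: q1), h', x', y', q2.
Qed.

Lemma decomp (pc : seq (I * A)) k x :
  x \in A_ k ->
  let x0 := x + (- phi x) *: one_ k in
  [/\ x0 \in A_ k, phi x0 = 0 & forall L,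
  phi (pw pc * (x * L)) = phi (pw pc * (x0 * L)) + phi x * phi (pw pc * (one_ k * L))].
Proof.
move=> Hx x0; have [S0 SD SZ SM SS] := Hsub k.
have [Sadd Sscale Sunit Spos] := Hst.
split.
- by apply: SD => //; apply: SZ; apply: one_in.
- rewrite /x0 Sadd Sscale phi_one mulr1; exact: subrr.
- move=> L; have Ex : x * L = x0 * L + phi x *: (one_ k * L).
    by rewrite scalerAl -mulrDl /x0 scaleNr addrNK.
  by rewrite Ex mulrDr Sadd -scalerAr Sscale.
Qed.

Ltac slia := repeat match goal with
  | H : is_true (leq _ _) |- _ => revert H
  | H : @eq nat _ _ |- _ => revert H
  | H : _ |- _ => clear H
  end; lia.

Ltac norm := rewrite ?map_cat ?map_rcons /= -?cats1 -?catA /=.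
Ltac inAt := rewrite -?cats1 ?inA_cat ?inA_cons /=; rewrite ?inA_cat ?inA_cons /=;
  repeat (apply/andP; split); try done; try (by rewrite /inA).

Lemma G_inner N
  (IHN : forall p i q, (size p + size q < N)%N -> inA (p ++ q) -> Hyp p i ->
     phi (pw p * one_ i * pw q) = phi (pw p * pw q))
  i q c : forall pc pa, size pa = c -> (size (pc ++ pa) + size q <= N)%N ->
  inA (pc ++ pa ++ q) -> cen pc ->
  sorted neq (map fst (pc ++ pa) ++ i :: map fst q) -> inc (map fst (pc ++ pa) ++ [:: i]) ->
  phi (pw (pc ++ pa) * one_ i * pw q) = phi (pw (pc ++ pa) * pw q).
Proof.
elim: c => [|c IHc] pc [|[k x] pa'] //= Hc Hsz HA Hcen Halt Hinc.
  rewrite cats0 in Halt Hinc *; exact: AX.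
move: Hc => /eqP; rewrite eqSS => /eqP Hc.
move: HA; rewrite inA_cat inA_cons inA_cat /= => /andP [HApc /andP [Hx /andP [HApa' HAq]]].
have [Hx0 Hphx0 Hdec] := decomp pc k x Hx.
have -> : pw (pc ++ (k, x) :: pa') * one_ i * pw q = pw pc * (x * (pw pa' * one_ i * pw q)).
  by rewrite pw_cat pw_cons /= !mulrA.
have -> : pw (pc ++ (k, x) :: pa') * pw q = pw pc * (x * (pw pa' * pw q)).
  by rewrite pw_cat pw_cons /= !mulrA.
rewrite !Hdec.
have Hsz' : (size pc + size pa' + size q < N)%N by move: Hsz; rewrite size_cat /=; slia.
move: Halt Hinc; norm => Halt Hinc.
have Halt2 : sorted neq (map fst pc ++ k :: map fst pa' ++ [:: i]).
  by apply: (@sorted_pre _ _ _ _ (map fst q)); rewrite -catA.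
have Haltk : sorted neq (map fst pc ++ [:: k]).
  by apply: (@sorted_pre _ _ _ [::] (map fst pa' ++ i :: map fst q)).
have Hinck : inc (map fst pc ++ [:: k]).
  by apply: (@inc_pre _ (map fst pa' ++ [:: i])); rewrite -catA.
congr (_ + _ * _).
  set x0 := x + _.
  have := IHc (rcons pc (k, x0)) pa' Hc.
  rewrite -cats1 -catA /= !pw_cat !pw_cons /= !mulrA; apply.
  - rewrite !size_cat /=; slia.
  - by rewrite !inA_cat inA_cons /= HApc Hx0 HApa' HAq.
  - rewrite /cen all_cat; apply/andP; split; [exact: Hcen | by rewrite /= Hphx0 eqxx].
  - by norm.
  - by norm.
transitivity (phi (pw (pc ++ pa') * pw q)); last first.
  rewrite (_ : pw pc * (one_ k * (pw pa' * pw q)) = pw pc * one_ k * pw (pa' ++ q)); last first.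
    by rewrite pw_cat !mulrA.
  rewrite IHN.
  - by rewrite !pw_cat !mulrA.
  - rewrite size_cat; slia.
  - by rewrite !inA_cat HApc HApa' HAq.
  - by right.
rewrite (_ : pw pc * (one_ k * (pw pa' * one_ i * pw q)) = pw pc * one_ k * pw (pa' ++ (i, one_ i) :: q)); last first.
  by rewrite pw_cat pw_cons !mulrA.
rewrite AX //; first last.
- by norm.
- by rewrite !inA_cat inA_cons /= one_in HApc HApa' HAq.
rewrite (_ : pw pc * pw (pa' ++ (i, one_ i) :: q) = pw (pc ++ pa') * one_ i * pw q); last first.
  by rewrite !pw_cat pw_cons !mulrA.
clear Hdec Haltk Hinck Halt.
case/lastP: pc HApc Hcen Hsz Hsz' Halt2 Hinc => [|pc0 [h y]] HApc Hcen Hsz Hsz' Halt2 Hinc.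
  apply: IHN.
  - rewrite /=; slia.
  - by rewrite inA_cat HApa' HAq.
  - right; split; first exact: path_sorted Halt2.
    exact: (@inc_rem [::] _ k).
rewrite ?map_cat ?map_rcons /= -?cats1 -?catA /= in Halt2 Hinc.
rewrite -cats1 inA_cat in HApc; case/andP: HApc => HApc0 /andP [Hy _].
case: pa' Hc Hsz Hsz' HApa' Halt2 Hinc => [|[h2 z] pa''] Hc Hsz Hsz' HApa' Halt2 Hinc.
  case: (eqVneq h i) => [Ehi|Nhi].
    apply: IHN.
    - rewrite ?size_cat ?size_rcons /= in Hsz' *; slia.
    - inAt.
    - by rewrite /Hyp; left; exists pc0, y; rewrite ?cats0 Ehi.
  apply: IHN.
  - rewrite ?size_cat ?size_rcons /= in Hsz' *; slia.
  - inAt.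
  - rewrite /Hyp; right; norm; split; first exact: alt_rem Halt2 Nhi.
    have H1 := @inc_rem (map fst pc0 ++ [:: h]) [:: i] k.
    rewrite -!catA /= in H1; apply: H1; exact: Hinc.
move: HApa'; rewrite inA_cons /= => /andP [Hz HApa''].
case: (eqVneq h h2) => [Ehh|Nhh].
  subst h2.
  rewrite (_ : pw (rcons pc0 (h, y) ++ (h, z) :: pa'') = pw (pc0 ++ (h, y * z) :: pa'')); last first.
    by rewrite -cats1 -catA /= !pw_cat !pw_cons /= !mulrA.
  apply: IHN.
  - rewrite ?size_cat ?size_rcons /= in Hsz' *; slia.
  - have [_ _ _ SM _] := Hsub h.
    inAt; exact: SM.
  - rewrite /Hyp; right; norm; split; first exact: alt_merge Halt2.
    have H1 := @inc_rem (map fst pc0 ++ [:: h]) (h :: map fst pa'' ++ [:: i]) k.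
    have H2 := @inc_rem (map fst pc0 ++ [:: h]) (map fst pa'' ++ [:: i]) h.
    rewrite -!catA /= in H1 H2; apply: H2; apply: H1; exact: Hinc.
apply: IHN.
- rewrite ?size_cat ?size_rcons /= in Hsz' *; slia.
- inAt.
- rewrite /Hyp; right; norm; split; first exact: alt_rem Halt2 Nhh.
  have H1 := @inc_rem (map fst pc0 ++ [:: h]) (h2 :: map fst pa'' ++ [:: i]) k.
  rewrite -!catA /= in H1; apply: H1; exact: Hinc.
Qed.

Lemma G_step N
  (IHN : forall p i q, (size p + size q < N)%N -> inA (p ++ q) -> Hyp p i ->
     phi (pw p * one_ i * pw q) = phi (pw p * pw q))
  p i q : (size p + size q <= N)%N -> inA (p ++ q) -> Hyp p i ->
  phi (pw p * one_ i * pw q) = phi (pw p * pw q).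
Proof.
move=> Hsz HA [[p' [y Ep]] | [Halt Hinc]].
  subst p; move: HA; rewrite -cats1 inA_cat inA_cat /= => /andP [/andP [_ /andP [Hy _]] _].
  by rewrite pw_cat pw_cons pw_nil mulr1 -(mulrA (pw p')) unit_r.
case: (split_q i q) => [Hq | [[y [q' Eq]] | [q1 [h [x [y [q2 Eq]]]]]]].
- apply: (@G_inner N IHN i q (size p) [::] p) => //=.
  by rewrite sorted_cat_cons -cats1 Halt.
- subst q; move: HA; rewrite inA_cat inA_cons /= => /andP [_ /andP [Hy _]].
  by rewrite pw_cons !mulrA -(mulrA _ (one_ i)) unit_l.
- subst q.
  have [_ _ _ SM _] := Hsub h.
  have -> : pw (q1 ++ [:: (h, x), (h, y) & q2]) = pw (q1 ++ (h, x * y) :: q2).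
    by rewrite !pw_cat !pw_cons /= !mulrA.
  move: HA; rewrite !inA_cat !inA_cons /= => /and3P [HAp HAq1 /and3P [Hx Hy HAq2]].
  apply: IHN.
  + rewrite !size_cat /= in Hsz *; slia.
  + by rewrite !inA_cat !inA_cons /= HAp HAq1 SM.
  + by right.
Qed.

Lemma G N p i q : (size p + size q <= N)%N -> inA (p ++ q) -> Hyp p i ->
  phi (pw p * one_ i * pw q) = phi (pw p * pw q).
Proof.
elim: N p i q => [|N IHN] p i q Hsz.
  apply: (@G_step 0 _ p i q Hsz) => p' i' q'; by rewrite ltn0.
apply: (@G_step N.+1 _ p i q Hsz) => p' i' q' Hlt; apply: IHN; slia.
Qed.

End Main.

Theorem lemma3p5 (R : realType) (A : algType R[i]) (star : A -> A) (phi : A -> R[i])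
    (d : Order.disp_t) (I : orderType d) (A_ : I -> {pred A}) (one_ : I -> A) (m : nat) :
  is_star_algebra star ->
  is_state star phi ->
  (forall i, is_star_subalgebra star (A_ i)) ->
  mmonotone star phi A_ m ->
  mmonotone_units star phi A_ one_ m ->
  forall (n j r : nat) (idx : nat -> I) (a : nat -> A),
    (1 <= j)%N -> (j <= r)%N -> (m <= r)%N -> (r <= n)%N ->
    mpattern idx m r n ->
    (forall k, (1 <= k)%N -> (k <= n)%N -> k != j -> a k \in A_ (idx k)) ->
    phi (word_at a n j (one_ (idx j))) = phi (word_omit a n j).
Proof.
move=> Hstar Hst Hsub Hmm Hu n j r idx a Hj1 Hjr Hmr Hrn Hpat Hel.
have [Hp1 Hp2 Hp3] := Hpat.
have Hjn : (j <= n)%N by lia.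
pose F k := (idx k, a k).
set p := [seq F k | k <- iota 1 j.-1].
set q := [seq F k | k <- iota j.+1 (n - j)].
have Hsp : size p = j.-1 by rewrite size_map size_iota.
have Hsq : size q = (n - j)%N by rewrite size_map size_iota.
have Hpre : \prod_(1 <= k < j) a k = pw R A d I p.
  have -> : j = (1 + size p)%N by rewrite Hsp; lia.
  rewrite /pw; apply: (big_seq_nat _ _ _ _ _ _ (idx j, 0)) => u Hu'.
  have Hu2 : (u < j.-1)%N by rewrite -Hsp.
  by rewrite /p (nth_map 0%N) ?nth_iota ?size_iota.
have Hsuf : \prod_(j.+1 <= k < n.+1) a k = pw R A d I q.
  have -> : n.+1 = (j.+1 + size q)%N by rewrite Hsq; lia.
  rewrite /pw; apply: (big_seq_nat _ _ _ _ _ _ (idx j, 0)) => u Hu'.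
  have Hu2 : (u < n - j)%N by rewrite -Hsq.
  by rewrite /q (nth_map 0%N) ?nth_iota ?size_iota.
rewrite word_at_split // word_omit_split // Hpre Hsuf.
have Ht : map fst p ++ [:: idx j] = map idx (iota 1 j).
  rewrite -map_comp.
  have -> : iota 1 j = iota 1 j.-1 ++ [:: j].
    have -> : [:: j] = iota (1 + j.-1) 1 by rewrite /=; congr [:: _]; lia.
    rewrite -iotaD; congr iota; lia.
  by rewrite map_cat.
apply: (G _ _ _ _ _ _ _ _ _ Hsub Hst Hu (size p + size q)%N) => //.
- rewrite /inA all_cat; apply/andP; split; apply/allP => x /mapP [k Hk ->] /=;
    rewrite mem_iota in Hk; apply: Hel; try lia; apply/negP => /eqP E; lia.
- rewrite /Hyp; right; rewrite Ht; split.
  + apply/(sortedP (idx j)) => u; rewrite size_map size_iota => Hu'.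
    rewrite !(nth_map 0%N) ?size_iota ?nth_iota; try lia.
    case: (ltnP (1 + u) m) => Hum.
      apply: Hp1; lia.
    by rewrite /neq addnS (lt_eqF (Hp2 _ _ _ _)) //; lia.
  + rewrite /inc; apply/(sortedP (idx j)) => u; rewrite size_drop size_map size_iota => Hu'.
    rewrite !nth_drop !(nth_map 0%N) ?size_iota ?nth_iota; try lia.
    rewrite (_ : (1 + (m.-1 + u.+1))%N = (1 + (m.-1 + u)).+1); last by lia.
    apply: Hp2; lia.
Qed.
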